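(* Let $n \geq 1$ and let $\Gamma$ be a group that is the directed union of a directed family $(\Gamma_i)_{i\in I}$ of subgroups which are pairwise isomorphic and $n$-boundedly acyclic. Then $\Gamma$ is $n$-boundedly acyclic.
   Context: A group $G$ is $n$-boundedly acyclic if $\operatorname{H}^i_b(G;\mathbb{R}) \cong 0$ for all $i \in \{1,\dots,n\}$, where $\operatorname{H}^*_b(\cdot;\mathbb{R})$ is bounded cohomology with trivial real coefficients. *)

(* Defs.v *)
From HB Require Import structures.
From Stdlib Require Import Reals ProofIrrelevance.
From mathcomp Require Import all_boot all_order all_algebra.
From mathcomp Require Import Rstruct.
Set Implicit Arguments. Unset Strict Implicit. Unset Printing Implicit Defensive.
Import GRing.Theory Num.Theory.

Record group := Group {
  gcar :> Type;
  gmul : gcar -> gcar -> gcar;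
  gone : gcar;
  ginv : gcar -> gcar;
  gmulA : forall x y z, gmul x (gmul y z) = gmul (gmul x y) z;
  gmul1 : forall x, gmul gone x = x;
  gmulV : forall x, gmul (ginv x) x = gone }.

Arguments gmul {g}. Arguments gone {g}. Arguments ginv {g}.

Record subgroup (G : group) := Subgroup {
  smem : G -> Prop;
  smem1 : smem gone;
  smemM : forall x y, smem x -> smem y -> smem (gmul x y);
  smemV : forall x, smem x -> smem (ginv x) }.

Lemma sig_val_inj (T : Type) (P : T -> Prop) (a b : {x | P x}) :
  proj1_sig a = proj1_sig b -> a = b.
Proof.
case: a b => [x px] [y py] /= exy; subst y.
by rewrite (proof_irrelevance _ px py).
Qed.

Section SubGroupAsGroup.
Variables (G : group) (H : subgroup G).
Definition sg_car := {x : G | smem H x}.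
Definition sg_mul (a b : sg_car) : sg_car :=
  exist _ (gmul (proj1_sig a) (proj1_sig b)) (smemM (proj2_sig a) (proj2_sig b)).
Definition sg_one : sg_car := exist _ gone (smem1 H).
Definition sg_inv (a : sg_car) : sg_car := exist _ (ginv (proj1_sig a)) (smemV (proj2_sig a)).
Lemma sg_mulA x y z : sg_mul x (sg_mul y z) = sg_mul (sg_mul x y) z.
Proof. by apply: sig_val_inj; rewrite /= gmulA. Qed.
Lemma sg_mul1 x : sg_mul sg_one x = x.
Proof. by apply: sig_val_inj; rewrite /= gmul1. Qed.
Lemma sg_mulV x : sg_mul (sg_inv x) x = sg_one.
Proof. by apply: sig_val_inj; rewrite /= gmulV. Qed.
Definition subgroup_group : group := Group sg_mulA sg_mul1 sg_mulV.
End SubGroupAsGroup.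

Definition group_hom (G H : group) (f : G -> H) :=
  forall x y, f (gmul x y) = gmul (f x) (f y).
Definition isomorphic (G H : group) :=
  exists f : G -> H, group_hom f /\ bijective f.

Local Open Scope ring_scope.

(* Homogeneous bar complex with trivial real coefficients:
   degree-k cochains are functions G^(k+1) -> R, here ('I_k.+1 -> G) -> R. *)
Definition face (G : group) (k : nat) (i : 'I_k.+2) (x : 'I_k.+2 -> G)
  : 'I_k.+1 -> G := fun j => x (lift i j).

Definition hdelta (G : group) (k : nat) (f : ('I_k.+1 -> G) -> R)
  : ('I_k.+2 -> G) -> R :=
  fun x => \sum_(i < k.+2) (-1) ^+ i * f (face i x).

Definition invariant_cochain (G : group) (k : nat) (f : ('I_k -> G) -> R) :=
  forall (g : G) (x : 'I_k -> G), f (fun j => gmul g (x j)) = f x.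
Definition bounded_cochain (G : group) (k : nat) (f : ('I_k -> G) -> R) :=
  exists C : R, forall x, `|f x| <= C.
Definition bcochain (G : group) (k : nat) (f : ('I_k -> G) -> R) :=
  invariant_cochain f /\ bounded_cochain f.

(* H^(m+1)_b(G;R) = 0 : every bounded cocycle of degree m+1 is the
   coboundary of a bounded cochain of degree m. *)
Definition Hb_vanishes_succ (G : group) (m : nat) :=
  forall f : ('I_m.+2 -> G) -> R,
    bcochain f -> (forall x, hdelta f x = 0) ->
    exists g : ('I_m.+1 -> G) -> R, bcochain g /\ forall x, f x = hdelta g x.

(* n-boundedly acyclic: H^i_b(G;R) = 0 for all i in {1,...,n}, i.e. i = m+1, m < n. *)
Definition boundedly_acyclic (n : nat) (G : group) :=
  forall m : nat, (m < n)%N -> Hb_vanishes_succ G m.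

(* Main.v *)
From Stdlib Require Import Reals.
Require Import Defs.
From mathcomp Require Import all_boot all_order all_algebra.
From mathcomp Require Import boolp classical_sets filter reals Rstruct lra ring.
Import Order.TTheory GRing.Theory Num.Theory.
Local Open Scope ring_scope.
Set Implicit Arguments. Unset Strict Implicit.

Lemma close_eq (a b : R) : (forall e, 0 < e -> `|a - b| <= e) -> a = b.
Proof.
move=> h; apply/eqP; rewrite -subr_eq0 -normr_le0.
have d0 : 0 <= `|a - b| := normr_ge0 _.
rewrite leNgt; apply/negP => dp.
have := h (`|a - b| / 2) ltac:(lra). lra.
Qed.

Lemma le_of_eps (a b : R) : (forall e, 0 < e -> a <= b + e) -> a <= b.
Proof.
move=> h; rewrite leNgt; apply/negP => dp.
have := h ((a - b) / 2) ltac:(lra). lra.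
Qed.

Lemma directed_ultra (J : Type) (B : J -> set J) (j0 : J)
  (hne : forall i, exists x, B i x)
  (hdir : forall i j, exists k, forall x, B k x -> B i x /\ B j x) :
  exists U : set_system J, UltraFilter U /\ forall i, U (B i).
Proof.
have FF : Filter (filter_from setT B).
  apply: filter_fromT_filter; first by exists j0.
  move=> i j; have [k hk] := hdir i j; exists k => x /hk [] ? ?; by split.
have PF : ProperFilter (filter_from setT B).
  by apply: filter_from_proper => i _; exact: hne.
have [U [UU sub]] := ultraFilterLemma PF.
by exists U; split => // i; apply: sub; exists i.
Qed.

Lemma ulim1 (J : Type) (U : set_system J) (UU : UltraFilter U) (a : J -> R) (C : R)
  (hb : forall j, `|a j| <= C) :
  exists L : R, `|L| <= C /\ forall e, 0 < e -> U (fun j => `|a j - L| < e).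
Proof.
pose S := fun s : R => U (fun j => s <= a j).
have hS : has_sup S.
  split.
    exists (- C); apply: filterS (@filterT _ U _) => j _.
    by have := hb j; rewrite ler_norml => /andP[].
  exists C => s Ss; have [j hj] := filter_ex Ss.
  by have := hb j; rewrite ler_norml => /andP[_ h]; apply: le_trans h.
exists (sup S); split.
  rewrite ler_norml; apply/andP; split.
    apply: sup_upper_bound => //; apply: filterS (@filterT _ U _) => j _.
    by have := hb j; rewrite ler_norml => /andP[].
  apply: ge_sup; first by case: hS.
  move=> s Ss; have [j hj] := filter_ex Ss.
  by have := hb j; rewrite ler_norml => /andP[_ h]; apply: le_trans h.
move=> e e0.
have [s Ss hs] := sup_adherent e0 hS.
have nS : ~ S (sup S + e / 2).
  move=> h; have := sup_upper_bound hS h; lra.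
case: (in_ultra_setVsetC (fun j => sup S + e / 2 <= a j) UU) => // hC.
apply: filterS (filterI Ss hC) => j [h1 h2].
have h3 : a j < sup S + e / 2 by rewrite ltNge; apply/negP.
rewrite ltr_norml; apply/andP; split; lra.
Qed.

Lemma ulim (J T : Type) (U : set_system J) (UU : UltraFilter U) (a : J -> T -> R) (C : R)
  (hb : forall j t, `|a j t| <= C) :
  exists L : T -> R, (forall t, `|L t| <= C) /\
    forall t e, 0 < e -> U (fun j => `|a j t - L t| < e).
Proof.
have := fun t => @ulim1 J U UU (fun j => a j t) C (fun j => hb j t).
move=> /choice [L hL]; exists L; split=> t; [exact: (hL t).1 | exact: (hL t).2].
Qed.

Section Delta.
Variables (G : group) (k : nat).
Implicit Types (a b : ('I_k.+1 -> G) -> R).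

Lemma hdelta_ext a b x : (forall y, a y = b y) -> hdelta a x = hdelta b x.
Proof. by move=> h; rewrite /hdelta; apply: eq_bigr => i _; rewrite h. Qed.

Lemma hdeltaB a b x : hdelta (fun y => a y - b y) x = hdelta a x - hdelta b x.
Proof. rewrite /hdelta -sumrB; apply: eq_bigr => i _; ring. Qed.

Lemma hdeltaD a b x : hdelta (fun y => a y + b y) x = hdelta a x + hdelta b x.
Proof. rewrite /hdelta -big_split; apply: eq_bigr => i _ /=; ring. Qed.

Lemma hdeltaZ (c : R) a x : hdelta (fun y => c * a y) x = c * hdelta a x.
Proof. rewrite /hdelta mulr_sumr; apply: eq_bigr => i _; ring. Qed.

Lemma hdelta0 x : hdelta (fun _ : 'I_k.+1 -> G => 0) x = 0.
Proof. by rewrite /hdelta big1 // => i _; rewrite mulr0. Qed.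

Lemma hdelta_bound a x e : (forall i, `|a (face i x)| <= e) ->
  `|hdelta a x| <= k.+2%:R * e.
Proof.
move=> h; rewrite /hdelta; apply: le_trans (ler_norm_sum _ _ _) _.
apply: le_trans (_ : \sum_(i < k.+2) e <= _).
  apply: ler_sum => i _; rewrite normrM normrX normrN1 expr1n mul1r; exact: h.
by rewrite sumr_const card_ord mulr_natl.
Qed.

Lemma ulim_hdelta (J : Type) (U : set_system J) (UU : UltraFilter U)
  (g : J -> ('I_k.+1 -> G) -> R) L
  (hL : forall t e, 0 < e -> U (fun j => `|g j t - L t| < e)) x e (he : 0 < e) :
  U (fun j => `|hdelta (g j) x - hdelta L x| <= e).
Proof.
have FU : Filter U by case: UU => [[]].
have kp : 0 < k.+2%:R :> R by rewrite ltr0n.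
have he' : 0 < e / k.+2%:R by rewrite divr_gt0.
have := @filter_forall _ 'I_k.+2
  (fun i j => `|g j (face i x) - L (face i x)| < e / k.+2%:R) U FU
  (fun i => hL _ _ he').
move=> hh; apply: (filterS _ hh) => j /= hj.
rewrite -hdeltaB.
have := @hdelta_bound (fun y => g j y - L y) x (e / k.+2%:R) (fun i => ltW (hj i)).
by rewrite mulrC divfK // pnatr_eq0.
Qed.

End Delta.

Lemma ulim_inv (J : Type) (U : set_system J) (UU : UltraFilter U) (G : group) k
  (g : J -> ('I_k -> G) -> R) L
  (hL : forall t e, 0 < e -> U (fun j => `|g j t - L t| < e))
  (hev : forall h x, U (fun j => g j (fun i => gmul h (x i)) = g j x)) :
  invariant_cochain L.
Proof.
have PU : ProperFilter U by case: UU.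
have FU : Filter U by case: UU => [[]].
move=> h x; apply: close_eq => e e0.
have e2 : 0 < e / 2 by lra.
have h1 := hL (fun i => gmul h (x i)) _ e2.
have h2 := hL x _ e2.
have [j [[{}h1 {}h2] h3]] := filter_ex (filterI (filterI h1 h2) (hev h x)).
move: h1; rewrite h3 => h1.
have := ler_distD (g j x) (L (fun i => gmul h (x i))) (L x).
rewrite [`|L _ - g j x|]distrC; lra.
Qed.

Definition Zc (G : group) m (f : ('I_m.+2 -> G) -> R) :=
  bcochain f /\ forall x, hdelta f x = 0.
Definition AN (G : group) m (N : R) (f : ('I_m.+2 -> G) -> R) :=
  Zc f /\ exists g : ('I_m.+1 -> G) -> R,
    invariant_cochain g /\ (forall y, `|g y| <= N) /\ forall x, f x = hdelta g x.
Definition dist_le (T : Type) (f h : T -> R) e := forall x, `|f x - h x| <= e.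

Lemma nat_ultra : exists U : set_system nat, UltraFilter U /\ forall N, U (fun n => (N <= n)%N).
Proof.
apply: (@directed_ultra nat (fun N n => (N <= n)%N) 0%N).
  by move=> i; exists i.
move=> i j; exists (maxn i j) => x; rewrite geq_max => /andP[]; by split.
Qed.

Lemma Zc0 (G : group) m : Zc (fun _ : 'I_m.+2 -> G => 0).
Proof.
split; last by move=> x; rewrite hdelta0.
split; first by [].
by exists 0 => x; rewrite normr0.
Qed.

Section Baire.
Variables (G : group) (m : nat) (hyp : Hb_vanishes_succ G m).
Notation Y := ('I_m.+2 -> G).
Notation X := ('I_m.+1 -> G).

Lemma baire : exists N : R, exists f0 : Y -> R, exists r : R, 0 < r /\ Zc f0 /\
   forall f, Zc f -> dist_le f f0 r -> forall e, 0 < e ->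
     exists h, AN N h /\ dist_le f h e.
Proof.
apply: contrapT => hneg.
have step : forall (N : nat) (f0 : Y -> R) r, 0 < r -> Zc f0 ->
    exists fe : (Y -> R) * R, Zc fe.1 /\ dist_le fe.1 f0 r /\ 0 < fe.2 /\
      forall h, AN N%:R h -> ~ dist_le fe.1 h fe.2.
  move=> N f0 r r0 z0; apply: contrapT => H; apply: hneg.
  exists N%:R, f0, r; split=> //; split=> // f zf df e e0.
  apply: contrapT => H2; apply: H; exists (f, e); split => //; split => //; split => //= h ah dh.
  by apply: H2; exists h.
have : forall Np : nat * ((Y -> R) * R), exists q : (Y -> R) * R,
    0 < Np.2.2 -> Zc Np.2.1 ->
    [/\ Zc q.1, dist_le q.1 Np.2.1 (Np.2.2 / 2), 0 < q.2, q.2 <= Np.2.2 / 2 &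
      forall h, AN Np.1%:R h -> ~ dist_le q.1 h q.2].
  case=> N [f0 r] /=.
  case: (pselect (0 < r /\ Zc f0)) => [[r0 z0]|hn]; last first.
    by exists (f0, r) => a b; exfalso; apply: hn.
  have [[f e] [zf [df [e0 he]]]] := step N f0 (r / 2) ltac:(lra) z0.
  exists (f, Num.min e (r / 2)) => _ _ /=; split => //.
  - by rewrite lt_min e0 /=; lra.
  - by rewrite ge_min lexx orbT.
  move=> h ah dh; apply: (he h ah) => x /=; apply: le_trans (dh x) _.
  by rewrite ge_min lexx.
move=> /choice [Phi hPhi].
pose s := fix s (N : nat) : (Y -> R) * R :=
  match N with 0%N => ((fun _ => 0), 1) | N'.+1 => Phi (N', s N') end.
have sS N : s N.+1 = Phi (N, s N) by [].
have inv N : 0 < (s N).2 /\ Zc (s N).1.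
  elim: N => [|N [IH1 IH2]]; first by split; [rewrite /=; lra | exact: Zc0].
  by rewrite sS; have [] := hPhi (N, s N) IH1 IH2.
have nest N d : dist_le (s (N + d)%N).1 (s N).1 ((s N).2 - (s (N + d)%N).2).
  rewrite /dist_le; elim: d => [|d IH] x; first by rewrite addn0 !subrr normr0.
  rewrite addnS sS.
  have [r0 z0] := inv (N + d)%N.
  have [_ h1 _ h2 _] := hPhi (N + d, s (N + d))%N r0 z0.
  have := h1 x; have := IH x; rewrite /=.
  have := ler_distD ((s (N + d)%N).1 x) ((Phi (N + d, s (N + d))%N).1 x) ((s N).1 x).
  lra.
have bnd N x : `|(s N).1 x| <= 1.
  have := nest 0%N N x; rewrite add0n /= subr0.
  have [r0 _] := inv N; lra.
have [U [UU hU]] := nat_ultra.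
have PU : ProperFilter U by case: UU.
have FU : Filter U by case: UU => [[]].
have [F [Fb FL]] := @ulim nat Y U UU (fun N => (s N).1) 1 bnd.
have closeF N : dist_le F (s N).1 (s N).2.
  move=> x; apply: le_of_eps => e e0.
  have [M [h1 h2]] := filter_ex (filterI (FL x e e0) (hU N)).
  have := nest N (M - N)%N x; rewrite subnKC //.
  have [rM _] := inv M.
  have := ler_distD ((s M).1 x) (F x) ((s N).1 x).
  rewrite [`|F x - (s M).1 x|]distrC; lra.
have ZF : Zc F.
  split; first split.
  - apply: (ulim_inv UU FL) => h x; apply: filterS (@filterT _ U _) => M _.
    by have [_ [[hi _] _]] := inv M; apply: hi.
  - by exists 1.
  move=> x; apply: close_eq => e e0; rewrite subr0.
  have [M hM] := filter_ex (ulim_hdelta UU FL x e0).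
  have [_ [_ hc]] := inv M.
  by move: hM; rewrite hc sub0r normrN.
have [g [[gi [C0 gb]] hg]] := hyp ZF.1 ZF.2.
pose N := Num.Def.archi_bound `|C0|.
have hN : C0 <= N%:R.
  apply: le_trans (ltW (archi_boundP (normr_ge0 C0))); exact: ler_norm.
have AF : AN N%:R F.
  split => //; exists g; split => //; split => // y; exact: le_trans (gb y) hN.
have [r0 z0] := inv N.
have [_ _ _ _ hno] := hPhi (N, s N) r0 z0.
apply: (hno F AF) => x.
rewrite -sS distrC; exact: closeF.
Qed.

End Baire.

Lemma Zc_ext (G : group) m (a b : ('I_m.+2 -> G) -> R) :
  (forall x, a x = b x) -> Zc a -> Zc b.
Proof.
move=> e [[ia [C ha]] ca]; split; first split.
- by move=> g x; rewrite -!e ia.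
- by exists C => x; rewrite -e.
by move=> x; rewrite -(hdelta_ext x e) ca.
Qed.

Lemma Zc_lin (G : group) m (al be : R) (a b : ('I_m.+2 -> G) -> R) :
  Zc a -> Zc b -> Zc (fun x => al * a x + be * b x).
Proof.
move=> [[ia [Ca ha]] ca] [[ib [Cb hb]] cb]; split; first split.
- by move=> g x; rewrite ia ib.
- exists (`|al| * Ca + `|be| * Cb) => x.
  apply: le_trans (ler_normD _ _) _; rewrite !normrM.
  by apply: lerD; apply: ler_wpM2l => //; rewrite normr_ge0.
move=> x; rewrite hdeltaD hdeltaZ hdeltaZ ca cb; ring.
Qed.

Section Approx.
Variables (G : group) (m : nat) (hyp : Hb_vanishes_succ G m).
Notation Y := ('I_m.+2 -> G).
Notation X := ('I_m.+1 -> G).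

Lemma approx : exists M : R, 0 <= M /\ forall f : Y -> R, Zc f -> forall c, 0 < c ->
   (forall x, `|f x| <= c) -> forall e, 0 < e ->
   exists g : X -> R, invariant_cochain g /\ (forall y, `|g y| <= M * c) /\
     Zc (fun x => hdelta g x) /\ dist_le f (fun x => hdelta g x) e.
Proof.
have [N [f0 [r [r0 [z0 hb]]]]] := baire hyp.
exists (2 * `|N| / r); split.
  by apply: divr_ge0; [apply: mulr_ge0 => //; lra| exact: ltW].
move=> f zf c c0 fb e e0.
pose l := r / c.
have l0 : 0 < l by rewrite divr_gt0.
pose f' := fun x => 1 * f0 x + l * f x.
have zf' : Zc f' := Zc_lin 1 l z0 zf.
have df' : dist_le f' f0 r.
  move=> x; have -> : f' x - f0 x = l * f x by rewrite /f'; ring.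
  rewrite normrM (gtr0_norm l0) /l mulrAC ler_pdivrMr // ler_pM2l //; exact: fb.
have el : 0 < e * l / 2 by rewrite divr_gt0 // mulr_gt0.
have [h1 [[zh1 [g1 [gi1 [gb1 gh1]]]] dh1]] := hb f' zf' df' _ el.
have d00 : dist_le f0 f0 r by move=> x; rewrite subrr normr0; exact: ltW.
have [h2 [[zh2 [g2 [gi2 [gb2 gh2]]]] dh2]] := hb f0 z0 d00 _ el.
pose g := fun y => l^-1 * (g1 y - g2 y).
have dg x : hdelta g x = l^-1 * (h1 x - h2 x).
  by rewrite hdeltaZ hdeltaB gh1 gh2.
exists g; split; last split; last split.
- by move=> h y; rewrite /g gi1 gi2.
- move=> y; rewrite /g normrM ger0_norm ?invr_ge0 ?(ltW l0) //.
  have -> : 2 * `|N| / r * c = l^-1 * (2 * `|N|).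
    by rewrite /l invf_div; field; rewrite gt_eqF.
  apply: ler_wpM2l; first by rewrite invr_ge0 ltW.
  apply: le_trans (ler_normB _ _) _.
  have := gb1 y; have := gb2 y; have := ler_norm N; lra.
- apply: (@Zc_ext _ _ (fun x => l^-1 * h1 x + (- l^-1) * h2 x)); last exact: Zc_lin.
  by move=> x; rewrite dg; ring.
move=> x; rewrite dg.
have -> : f x - l^-1 * (h1 x - h2 x) =
    l^-1 * ((f' x - h1 x) - (f0 x - h2 x)).
  by rewrite /f'; field; rewrite gt_eqF.
rewrite normrM ger0_norm ?invr_ge0 ?(ltW l0) // ler_pdivrMl //.
apply: le_trans (ler_normB _ _) _.
have := dh1 x; have := dh2 x; lra.
Qed.

End Approx.

Definition unif_const (G : group) m (C : R) := 0 <= C /\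
  forall f : ('I_m.+2 -> G) -> R, Zc f -> forall c, 0 < c -> (forall x, `|f x| <= c) ->
  exists g : ('I_m.+1 -> G) -> R, invariant_cochain g /\
    (forall y, `|g y| <= C * c) /\ forall x, f x = hdelta g x.

Lemma uniform (G : group) m (hyp : Hb_vanishes_succ G m) : exists C, unif_const G m C.
Proof.
have [M [M0 hM]] := approx hyp.
exists (2 * M); split; first by lra.
move=> f zf c c0 fb.
pose d K := c / (2 ^ K)%:R.
have P0 K : 0 < (2 ^ K)%:R :> R by rewrite ltr0n expn_gt0.
have dpos K : 0 < d K by rewrite divr_gt0.
have dS K : d K.+1 = d K / 2.
  by rewrite /d expnS natrM; field; rewrite gt_eqF.
have d_0 : d 0%N = c by rewrite /d expn0 divr1.
have : forall Ke : nat * (('I_m.+2 -> G) -> R), exists g : ('I_m.+1 -> G) -> R,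
   Zc Ke.2 -> (forall x, `|Ke.2 x| <= d Ke.1) ->
   [/\ invariant_cochain g, forall y, `|g y| <= M * d Ke.1,
       Zc (fun x => hdelta g x) & dist_le Ke.2 (fun x => hdelta g x) (d Ke.1.+1)].
  case=> K e /=.
  case: (pselect (Zc e /\ forall x, `|e x| <= d K)) => [[ze eb]|hn]; last first.
    by exists (fun _ => 0) => a b; exfalso; apply: hn.
  have [g [gi [gb [zg dg]]]] := hM e ze (d K) (dpos K) eb (d K.+1) (dpos K.+1).
  by exists g.
move=> /choice [Phi hPhi].
pose es := fix es (K : nat) : (('I_m.+2 -> G) -> R) * (('I_m.+1 -> G) -> R) :=
  match K with
  | 0%N => (f, fun _ => 0)
  | K'.+1 => ((fun x => (es K').1 x - hdelta (Phi (K', (es K').1)) x),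
              (fun y => (es K').2 y + Phi (K', (es K').1) y))
  end.
have inv K : [/\ Zc (es K).1, forall x, `|(es K).1 x| <= d K,
   invariant_cochain (es K).2, forall y, `|(es K).2 y| <= 2 * M * c - 2 * (M * d K)
   & forall x, f x = (es K).1 x + hdelta (es K).2 x].
  elim: K => [|K [ze eb Si Sb fe]].
    split => //=.
    - by move=> x; rewrite d_0.
    - by move=> y; rewrite normr0 d_0; lra.
    - by move=> x; rewrite hdelta0 addr0.
  have [gi gb zg dg] := hPhi (K, (es K).1) ze eb.
  split => /=.
  - apply: (@Zc_ext _ _ (fun x => 1 * (es K).1 x + (-1) * hdelta (Phi (K, (es K).1)) x)).
      by move=> x; ring.
    exact: Zc_lin.
  - exact: dg.
  - by move=> h y; rewrite Si gi.
  - move=> y; apply: le_trans (ler_normD _ _) _.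
    have := Sb y; have := gb y; rewrite /= dS mulrA; lra.
  - by move=> x; rewrite hdeltaD fe; ring.
have Sbnd K y : `|(es K).2 y| <= 2 * M * c.
  have [_ _ _ Sb _] := inv K; apply: le_trans (Sb y) _.
  have : 0 <= M * d K by rewrite mulr_ge0 // ltW.
  lra.
have [U [UU hU]] := nat_ultra.
have PU : ProperFilter U by case: UU.
have FU : Filter U by case: UU => [[]].
have [Gf [Gb GL]] := @ulim nat _ U UU (fun K => (es K).2) (2 * M * c) Sbnd.
exists Gf; split; last split.
- apply: (ulim_inv UU GL) => h x; apply: filterS (@filterT _ U _) => K _.
  by have [_ _ Si _ _] := inv K; apply: Si.
- exact: Gb.
move=> x; apply: close_eq => e e0.
have e2 : 0 < e / 2 by lra.
have [B hB0] : exists B : nat, 2 * c / e < B%:R.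
  exists (Num.Def.archi_bound (2 * c / e)); apply: archi_boundP.
  by apply: ltW; rewrite divr_gt0 // mulr_gt0.
have hB : 2 * c / e < (2 ^ B)%:R.
  apply: (lt_trans hB0); rewrite ltr_nat; exact: ltn_expl.
have dB : d B <= e / 2.
  rewrite /d ler_pdivrMr //.
  move: hB; rewrite ltr_pdivrMr //.
  have -> : e / 2 * (2 ^ B)%:R = (2 ^ B)%:R * e / 2 by ring.
  lra.
have dmono j : d (B + j)%N <= d B.
  elim: j => [|j IH]; first by rewrite addn0.
  rewrite addnS dS; have := dpos (B + j)%N; lra.
have [K [h1 h2]] := filter_ex (filterI (ulim_hdelta UU GL x e2) (hU B)).
have [_ eb _ _ fe] := inv K.
rewrite fe.
have := dmono (K - B)%N; rewrite subnKC // => hd.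
have -> : (es K).1 x + hdelta (es K).2 x - hdelta Gf x =
   (es K).1 x + (hdelta (es K).2 x - hdelta Gf x) by ring.
apply: le_trans (ler_normD _ _) _.
have := eb x; move: h1 => /=; lra.
Qed.

Lemma transfer (G H : group) m (phi : G -> H) (hphi : group_hom phi)
  (bij : bijective phi) C : unif_const G m C -> unif_const H m C.
Proof.
move=> [C0 hC]; split => // f [[fi [Bf fb]] fc] c c0 fbc.
have [psi phiK psiK] := bij.
have hpsi : group_hom psi.
  move=> a b; apply: (can_inj phiK); rewrite hphi !psiK //.
pose f' := fun y : 'I_m.+2 -> G => f (fun j => phi (y j)).
have zf' : Zc f'.
  split; first split.
  - move=> g y; rewrite /f'.
    have -> : (fun j => phi (gmul g (y j))) = (fun j => gmul (phi g) (phi (y j))).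
      by apply: funext => j; rewrite hphi.
    exact: fi.
  - by exists Bf => y; apply: fb.
  - move=> x; exact: (fc (fun j => phi (x j))).
have [g' [gi [gb ge]]] := hC f' zf' c c0 (fun y => fbc _).
exists (fun y => g' (fun j => psi (y j))); split; last split.
- move=> h y /=.
  have -> : (fun j => psi (gmul h (y j))) = (fun j => gmul (psi h) (psi (y j))).
    by apply: funext => j; rewrite hpsi.
  exact: gi.
- by move=> y; apply: gb.
move=> x.
have := ge (fun j => psi (x j)); rewrite /f'.
have -> : (fun j => phi (psi (x j))) = x by apply: funext => j; rewrite psiK.
by move=> ->.
Qed.

Unset Implicit Arguments.

Theorem corollary4p14 (n : nat) (hn : (1 <= n)%N) (Gam : group)
  (I : Type) (Gi : I -> subgroup Gam)
  (hdir : forall i j : I, exists k : I,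
     (forall x, smem (Gi i) x -> smem (Gi k) x) /\
     (forall x, smem (Gi j) x -> smem (Gi k) x))
  (hunion : forall x : Gam, exists i : I, smem (Gi i) x)
  (hiso : forall i j : I,
     isomorphic (subgroup_group (Gi i)) (subgroup_group (Gi j)))
  (hacyc : forall i : I, boundedly_acyclic n (subgroup_group (Gi i))) :
  boundedly_acyclic n Gam.
Proof.
move=> m hm f [fi [Bf fb]] fc.
have [i0 _] := hunion gone.
have [C hC0] := uniform (hacyc i0 m hm).
have hC i : unif_const (subgroup_group (Gi i)) m C.
  have [phi [hphi bij]] := hiso i0 i.
  exact: (@transfer _ _ m phi hphi bij C hC0).
have C0 : 0 <= C by case: hC0.
pose c := `|Bf| + 1.
have c0 : 0 < c by rewrite /c; have := normr_ge0 Bf; lra.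
have fbc x : `|f x| <= c.
  by apply: le_trans (fb x) _; rewrite /c; have := ler_norm Bf; lra.
have : forall i, exists g : ('I_m.+1 -> subgroup_group (Gi i)) -> R,
    invariant_cochain g /\ (forall y, `|g y| <= C * c) /\
    forall x, f (fun j => proj1_sig (x j)) = hdelta g x.
  move=> i; have [_ hCi] := hC i.
  apply: (hCi (fun x => f (fun j => proj1_sig (x j)))) => //.
  split; first split.
  - by move=> g x; apply: fi.
  - by exists Bf => x; apply: fb.
  - by move=> x; exact: (fc (fun j => proj1_sig (x j))).
move=> Hex.
pose gf i := proj1_sig (cid (Hex i)).
have hgf i : invariant_cochain (gf i) /\ (forall y, `|gf i y| <= C * c) /\
    forall x, f (fun j => proj1_sig (x j)) = hdelta (gf i) x := proj2_sig (cid (Hex i)).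
pose E i (y : 'I_m.+1 -> Gam) : R :=
  match pselect (forall j, smem (Gi i) (y j)) with
  | left H => gf i (fun j => exist _ (y j) (H j))
  | right _ => 0 end.
have Eval i (x : 'I_m.+1 -> subgroup_group (Gi i)) :
    E i (fun j => proj1_sig (x j)) = gf i x.
  rewrite /E; case: pselect => [H|hn']; last first.
    by exfalso; apply: hn' => j; exact: (proj2_sig (x j)).
  by congr (gf i _); apply: funext => j; apply: sig_val_inj.
have Eb i y : `|E i y| <= C * c.
  rewrite /E; case: pselect => [H|_]; first by have [_ [gb _]] := hgf i; apply: gb.
  by rewrite normr0 mulr_ge0 // ltW.
pose B i := fun l => forall x, smem (Gi i) x -> smem (Gi l) x.
have [U [UU hU]] : exists U : set_system I, UltraFilter U /\ forall i, U (B i).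
  apply: (@directed_ultra I B i0); first by move=> i; exists i.
  move=> i j; have [k [hik hjk]] := hdir i j; exists k => l hl.
  by split => x hx; apply: hl; [apply: hik | apply: hjk].
have PU : ProperFilter U by case: UU.
have FU : Filter U by case: UU => [[]].
have ev k (y : 'I_k -> Gam) : U (fun l => forall j, smem (Gi l) (y j)).
  apply: (@filter_forall _ 'I_k (fun j l => smem (Gi l) (y j)) U FU) => j. have [i hi] := hunion (y j).
  by apply: filterS (hU i) => l hl; apply: hl.
have [Gf [Gb GL]] := @ulim I _ U UU E (C * c) Eb.
exists Gf; split; first split.
- apply: (ulim_inv UU GL) => h y.
  have [ih hih] := hunion h.
  apply: filterS (filterI (ev _ y) (hU ih)) => l [hy hl].
  pose x := fun j => exist (smem (Gi l)) (y j) (hy j) : subgroup_group (Gi l).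
  pose h' := exist (smem (Gi l)) h (hl h hih) : subgroup_group (Gi l).
  have [gi _] := hgf l.
  have e1 := Eval l x.
  have e2 := Eval l (fun j => gmul h' (x j)).
  rewrite /= in e1 e2.
  rewrite e1 e2; exact: gi.
- by exists (C * c).
move=> x; apply: close_eq => e e0.
have [l [hx hl]] := filter_ex (filterI (ev _ x) (ulim_hdelta UU GL x e0)).
pose x' := fun j => exist (smem (Gi l)) (x j) (hx j) : subgroup_group (Gi l).
have [_ [_ hg]] := hgf l.
have e1 : hdelta (E l) x = hdelta (gf l) x'.
  rewrite /hdelta; apply: eq_bigr => i _; congr (_ * _).
  exact: (Eval l (face i x')).
have e2 := hg x'.
rewrite /= in e2.
by rewrite e2 -e1.
Qed.
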